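(* Let $\mathcal G$ be a doubly connected molecular graph. Construct $\mathcal G_{new}$ from $\mathcal G$ as follows: add a new molecule $\mathcal M_{new}$; replace a diffusive edge $b_0$ of $\mathcal G$ joining molecules $\mathcal M_1$ and $\mathcal M_2$ by two diffusive edges, $b_1$ joining $\mathcal M_1$ and $\mathcal M_{new}$ and $b_2$ joining $\mathcal M_2$ and $\mathcal M_{new}$; and replace a blue solid edge $b$ of $\mathcal G$ joining molecules $\mathcal M_3$ and $\mathcal M_4$ by two blue solid edges, $b_3$ joining $\mathcal M_3$ and $\mathcal M_{new}$ and $b_4$ joining $\mathcal M_4$ and $\mathcal M_{new}$. Then: (i) if a blue solid edge of $\mathcal G$ different from $b$ is redundant in $\mathcal G$, then it is also redundant in $\mathcal G_{new}$; (ii) if $b$ is redundant in $\mathcal G$, then at least one of $b_3$, $b_4$ is redundant in $\mathcal G_{new}$; moreover, if one of $b_3,b_4$ that is redundant in $\mathcal G_{new}$ is changed into a diffusive edge, then the other one becomes redundant in the resulting graph.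
   Context: A molecular graph is a finite multigraph whose vertices are called molecules and each of whose edges joins two distinct molecules and is either a diffusive edge or a blue solid edge (parallel edges are allowed). A molecular graph is doubly connected if there exist two disjoint sets of edges, $\mathcal B_{black}$ consisting only of diffusive edges and $\mathcal B_{blue}$ consisting only of blue solid or diffusive edges, such that each of $\mathcal B_{black}$ and $\mathcal B_{blue}$ contains a spanning tree of the set of all molecules. A blue solid edge $e$ of a doubly connected graph is redundant if the graph obtained by deleting $e$ is still doubly connected. Changing a blue solid edge into a diffusive edge means replacing it by a diffusive edge with the same two endpoints. *)

(* Defs.v *)
From HB Require Import structures.
From mathcomp Require Import all_boot.
Set Implicit Arguments. Unset Strict Implicit. Unset Printing Implicit Defensive.

Inductive ekind := Diffusive | BlueSolid.

(* An edge joins two molecules (unordered: e1/e2 is just a listing order). *)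
Record edge (V : Type) := Edge { e1 : V; e2 : V; ek : ekind }.
Arguments Edge {V}.

(* A molecular graph on the finite set of molecules V is a list of edges;
   parallel edges are allowed, edges are identified by their position. *)
Definition mgraph (V : Type) := seq (edge V).

Definition molecular (V : finType) (g : mgraph V) : bool :=
  all (fun e => e1 e != e2 e) g.

Definition eat (V : Type) (g : mgraph V) (i : 'I_(size g)) : edge V :=
  tnth (in_tuple g) i.

Definition adj (V : finType) (g : mgraph V) (S : {set 'I_(size g)}) : rel V :=
  fun x y => [exists i in S,
    ((e1 (eat i) == x) && (e2 (eat i) == y)) ||
    ((e1 (eat i) == y) && (e2 (eat i) == x))].

Definition connects (V : finType) (g : mgraph V) (S : {set 'I_(size g)}) : Prop :=
  forall x y : V, connect (adj S) x y.

Definition spanning_tree (V : finType) (g : mgraph V) (T : {set 'I_(size g)}) : Prop :=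
  connects T /\ forall i, i \in T -> ~ connects (T :\ i).

Definition doubly_connected (V : finType) (g : mgraph V) : Prop :=
  exists Bblack Bblue : {set 'I_(size g)},
    [disjoint Bblack & Bblue] /\
    (forall i, i \in Bblack -> ek (eat i) = Diffusive) /\
    (* every edge is blue solid or diffusive, so no constraint on Bblue *)
    (exists T : {set 'I_(size g)}, T \subset Bblack /\ spanning_tree T) /\
    (exists T : {set 'I_(size g)}, T \subset Bblue /\ spanning_tree T).

(* kind of the i-th edge (defaults chosen so that being blue implies i < size g) *)
Definition is_blue_at (V : Type) (g : mgraph V) (i : nat) : Prop :=
  nth Diffusive (map (@ek V) g) i = BlueSolid.
Definition is_diff_at (V : Type) (g : mgraph V) (i : nat) : Prop :=
  nth BlueSolid (map (@ek V) g) i = Diffusive.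

Definition delete_edge (V : Type) (g : mgraph V) (i : nat) : mgraph V :=
  take i g ++ drop i.+1 g.

Definition to_diffusive (V : Type) (g : mgraph V) (i : nat) : mgraph V :=
  take i g ++ [seq Edge (e1 e) (e2 e) Diffusive | e <- take 1 (drop i g)]
    ++ drop i.+1 g.

Definition redundant (V : finType) (g : mgraph V) (i : nat) : Prop :=
  is_blue_at g i /\ doubly_connected (delete_edge g i).

Definition lift_edge (V : Type) (e : edge V) : edge (option V) :=
  Edge (Some (e1 e)) (Some (e2 e)) (ek e).

(* G_new: molecules option V, with M_new = None.  Edge i0 = b0 = (M1,M2) is
   replaced (at position i0) by b1 = (M1,M_new), and b2 = (M2,M_new) is appended
   at position size g; edge ib = b = (M3,M4) is replaced (at position ib) by
   b3 = (M3,M_new), and b4 = (M4,M_new) is appended at position (size g).+1.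
   All other edges keep their positions. *)
Definition gnew (V : Type) (g : mgraph V) (i0 ib : nat) : mgraph (option V) :=
  [seq (let: (k, e) := p in
        if k == i0 then Edge (Some (e1 e)) None Diffusive
        else if k == ib then Edge (Some (e1 e)) None BlueSolid
        else lift_edge e) | p <- zip (iota 0 (size g)) g]
  ++ [seq Edge (Some (e2 e)) None Diffusive | e <- take 1 (drop i0 g)]
  ++ [seq Edge (Some (e2 e)) None BlueSolid | e <- take 1 (drop ib g)].

(* Main.v *)
From HB Require Import structures.
Require Import Defs.
From mathcomp Require Import all_boot zify.
From Stdlib Require Import Classical.
Set Implicit Arguments. Unset Strict Implicit. Unset Printing Implicit Defensive.


Definition ekind_eqb (a b : ekind) : bool :=
  match a, b with Diffusive, Diffusive | BlueSolid, BlueSolid => true | _, _ => false end.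
Lemma ekind_eqP : Equality.axiom ekind_eqb.
Proof. by case; case; constructor. Qed.
HB.instance Definition _ := hasDecEq.Build ekind ekind_eqP.

Definition edge_to (V : Type) (e : edge V) := (e1 e, e2 e, ek e).
Definition edge_of (V : Type) (t : V * V * ekind) := Edge t.1.1 t.1.2 t.2.
Lemma edge_toK (V : Type) : cancel (@edge_to V) (@edge_of V).
Proof. by case. Qed.
HB.instance Definition _ (V : eqType) := Equality.copy (edge V) (can_type (@edge_toK V)).

Section Sub.
Variable T : eqType.
Definition msub (X Y : seq T) := forall e, count_mem e X <= count_mem e Y.
Lemma ms_trans X Y Z : msub X Y -> msub Y Z -> msub X Z.
Proof. by move=> h1 h2 e; apply: leq_trans (h1 e) (h2 e). Qed.
Lemma ms_rem (a : T) (X Y : seq T) : msub X Y -> msub (rem a X) (rem a Y).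
Proof. by move=> h e; rewrite !count_mem_rem; apply: leq_sub2r. Qed.
Lemma count_rem_in (a : T) (s : seq T) (e : T) : a \in s -> count_mem e s = (a == e) + count_mem e (rem a s).
Proof. by move=> h; rewrite (permP (perm_to_rem h)). Qed.
Lemma mem_rem_neq (a b : T) s : b \in s -> b != a -> b \in rem a s.
Proof.
elim: s => //= x s IH; rewrite in_cons => /orP[/eqP<-|h] nb.
  by rewrite (negbTE nb) mem_head.
by case: ifP => // _; rewrite in_cons IH ?orbT.
Qed.
Lemma ms_in (X Y : seq T) (a : T) : msub X Y -> a \in X -> a \in Y.
Proof. by move=> h; rewrite -!has_pred1 !has_count => /leq_trans; apply; exact: h. Qed.
End Sub.

Lemma map_rem_inj (A B : eqType) (f : A -> B) (a : A) s :
  injective f -> map f (rem a s) = rem (f a) (map f s).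
Proof.
move=> inj; elim: s => //= x s IH; rewrite inj_eq //.
by case: ifP => //= _; rewrite IH.
Qed.

Lemma count_map_inj (A B : eqType) (f : A -> B) (a : A) s :
  injective f -> count_mem (f a) (map f s) = count_mem a s.
Proof. by move=> inj; rewrite count_map; apply: eq_count => x /=; rewrite inj_eq. Qed.

Lemma ms_map (A B : eqType) (f : A -> B) X Y :
  injective f -> msub X Y -> msub (map f X) (map f Y).
Proof.
move=> inj h e; case: (classic (exists a, f a = e)) => [[a <-]|ne].
  by rewrite !count_map_inj.
rewrite count_map (@eq_count _ _ pred0) ?count_pred0 //.
by move=> x /=; apply/negP => /eqP fx; apply: ne; exists x.
Qed.


Definition joins (V : eqType) (e : edge V) (x y : V) : bool :=
  ((e1 e == x) && (e2 e == y)) || ((e1 e == y) && (e2 e == x)).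
Definition adjL (V : eqType) (L : seq (edge V)) : rel V :=
  fun x y => has (fun e => joins e x y) L.
Definition conn (V : finType) (L : seq (edge V)) := forall x y : V, connect (adjL L) x y.

Section Conn.
Variable V : finType.
Implicit Types L : seq (edge V).

Lemma joins_sym (e : edge V) x y : joins e x y = joins e y x.
Proof. by rewrite /joins orbC. Qed.
Lemma adjL_sym L : symmetric (adjL L).
Proof. by move=> x y; apply: eq_has => e; rewrite joins_sym. Qed.
Lemma csym L : connect_sym (adjL L).
Proof. exact: sym_connect_sym (@adjL_sym L). Qed.
Lemma conn_hub L (h : V) : (forall x, connect (adjL L) x h) -> conn L.
Proof. by move=> H x y; apply: connect_trans (H x) _; rewrite csym. Qed.
Lemma adjL_mono L L' x y : {subset L <= L'} -> adjL L x y -> adjL L' x y.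
Proof. by move=> s /hasP [e eL j]; apply/hasP; exists e => //; apply: s. Qed.
Lemma connect_mono L L' x y : {subset L <= L'} -> connect (adjL L) x y -> connect (adjL L') x y.
Proof. by move=> s; apply: connect_sub => a b h; apply: connect1; apply: adjL_mono h. Qed.
Lemma joins_adj L (e : edge V) x y : e \in L -> joins e x y -> adjL L x y.
Proof. by move=> eL j; apply/hasP; exists e. Qed.
Lemma edge_adj L (e : edge V) : e \in L -> adjL L (e1 e) (e2 e).
Proof. by move=> eL; apply: (joins_adj eL); rewrite /joins !eqxx. Qed.

Lemma cut_lemma L (e : edge V) x : e \in L -> connect (adjL L) x (e1 e) ->
  connect (adjL (rem e L)) x (e1 e) || connect (adjL (rem e L)) x (e2 e).
Proof.
move=> eL /connectP [p pth E]; elim: p x pth E => [|z p IH] x /=.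
  by move=> _ ->; rewrite connect0.
move=> /andP [hxz hp] E; have := IH _ hp E.
case: (boolP (adjL (rem e L) x z)) => hr.
  by move=> /orP [h|h]; apply/orP; [left|right]; apply: connect_trans (connect1 hr) h.
move=> _; case/hasP: hxz => e' e'L je'.
case: (eqVneq e' e) => [ee|ne].
  subst e'; move: je'; rewrite /joins => /orP [/andP [/eqP <- _]|/andP [_ /eqP <-]].
    by rewrite connect0.
  by rewrite connect0 orbT.
by case/negP: hr; apply/hasP; exists e' => //; apply: mem_rem_neq.
Qed.

Lemma path_rem L (f : edge V) (w : V) : forall q x, path (adjL L) x q -> w \notin x :: q ->
  (e1 f == w) || (e2 f == w) -> path (adjL (rem f L)) x q.
Proof.
elim=> [|z q IH] x //= /andP [hxz hp]; rewrite !in_cons negb_or => /andP [wx].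
rewrite negb_or => /andP [wz wq] fw.
rewrite IH ?in_cons ?negb_or ?wz //= andbT.
case/hasP: hxz => e' e'L je'; apply/hasP; exists e' => //.
apply: mem_rem_neq => //; apply/eqP => ee; subst e'.
move: je' fw; rewrite /joins => /orP [/andP [/eqP-> /eqP->]|/andP [/eqP-> /eqP->]] /orP [] /eqP wE;
  by move: wx wz; rewrite wE eqxx ?andbF.
Qed.

Lemma split_cross (r : rel V) (C : pred V) : forall p x, path r x p -> C x -> ~~ C (last x p) ->
  exists p1 v p2, [/\ p = p1 ++ v :: p2, C (last x p1) & ~~ C v].
Proof.
elim=> [|z p IH] x /=; first by move=> _ ->.
move=> /andP [_ hp] Cx; case: (boolP (C z)) => Cz.
  move=> hl; have [p1 [v [p2 [-> h1 h2]]]] := IH z hp Cz hl.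
  by exists (z :: p1), v, p2.
by move=> _; exists [::], z, p.
Qed.

Lemma exchange L (C : pred V) M1 M2 :
  conn L -> C M1 -> ~~ C M2 ->
  exists f, [/\ f \in L, C (e1 f) != C (e2 f) &
    forall x, connect (adjL (rem f L)) x M1 || connect (adjL (rem f L)) x M2].
Proof.
move=> cL CM1 CM2; have := cL M1 M2; move/connectP => [p0 pth0 E].
move: CM2; rewrite E => CM2.
case: (shortenP pth0) E CM2 => p pth uq _ lE CM2; clear pth0.
have [p1 [v [p2 [pE Cu Cv]]]] := split_cross pth CM1 CM2.
subst p; set u := last M1 p1 in Cu.
move: pth; rewrite cat_path /= => /and3P [h1 huv h2].
case/hasP: huv => f fL jf; exists f.
have vn : v \notin M1 :: p1.
  move: uq; rewrite -cat_cons cat_uniq => /and3P [_ hh _].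
  by apply/negP => vin; case/negP: hh; apply/hasP; exists v => //; rewrite mem_head.
have un : u \notin v :: p2.
  move: uq; rewrite -cat_cons cat_uniq => /and3P [_ hh _].
  apply/negP => uin; case/negP: hh; apply/hasP; exists u => //.
  by rewrite /u; exact: mem_last.
have fv : (e1 f == v) || (e2 f == v) by move: jf; rewrite /joins => /orP [] /andP [] /eqP-> /eqP->; rewrite eqxx ?orbT.
have fu : (e1 f == u) || (e2 f == u) by move: jf; rewrite /joins => /orP [] /andP [] /eqP-> /eqP->; rewrite eqxx ?orbT.
have c1 : connect (adjL (rem f L)) M1 u.
  by apply/connectP; exists p1 => //; apply: path_rem h1 vn fv.
have c2 : connect (adjL (rem f L)) v M2.
  apply/connectP; exists p2; first by apply: path_rem h2 un fu.
  by rewrite lE last_cat.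
split => //.
  by move: jf; rewrite /joins => /orP [] /andP [] /eqP-> /eqP->; rewrite ?Cu ?(negbTE Cv).
move=> x; have := cut_lemma fL (cL x (e1 f)).
have hu : forall y, connect (adjL (rem f L)) y u -> connect (adjL (rem f L)) y M1.
  by move=> y h; apply: connect_trans h _; rewrite csym.
have hv : forall y, connect (adjL (rem f L)) y v -> connect (adjL (rem f L)) y M2.
  by move=> y h; apply: connect_trans h _.
have Hu : connect (adjL (rem f L)) x u -> connect (adjL (rem f L)) x M1 || connect (adjL (rem f L)) x M2.
  by move=> h; rewrite (hu _ h).
have Hv : connect (adjL (rem f L)) x v -> connect (adjL (rem f L)) x M1 || connect (adjL (rem f L)) x M2.
  by move=> h; rewrite (hv _ h) orbT.
rewrite -lE.
by move: jf; rewrite /joins => /orP [] /andP [] /eqP-> /eqP-> /orP [] h; [apply: Hu|apply: Hv|apply: Hv|apply: Hu].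
Qed.
End Conn.

Lemma ledge_inj (V : Type) : injective (@lift_edge V).
Proof. by case=> a b k [c d l] [-> -> ->]. Qed.

Lemma connect_lift (V : finType) (L : seq (edge V)) x y :
  connect (adjL L) x y -> connect (adjL (map (@lift_edge V) L)) (Some x) (Some y).
Proof.
move/connectP => [p pth ->]; elim: p x pth => [|z p IH] x /=; first by rewrite connect0.
move=> /andP [hxz hp]; apply: connect_trans (connect1 _) (IH _ hp).
by rewrite /adjL has_map; apply: sub_has hxz => e.
Qed.


Definition isdiff (V : Type) (e : edge V) : bool := ek e == Diffusive.
Arguments isdiff {V}.
Notation lft := (@lift_edge _).

Ltac genl := do 20? (move: (count_mem _ _) => ?); do 20? (move: (nat_of_bool _) => ?);
  repeat match goal with H : ?T |- _ => lazymatch T with nat => fail | _ => clear H end end; lia.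

Section Core.
Variable V : finType.
Implicit Types K L : seq (edge V).

Lemma mem_lift (K : seq (edge V)) (e : edge V) : (lft e \in map lft K) = (e \in K).
Proof. by rewrite mem_map //; apply: ledge_inj. Qed.

Lemma attach K (L' : seq (edge (option V))) (w : V) c :
  (forall x, connect (adjL K) x w) -> {subset map lft K <= L'} -> c \in L' ->
  joins c None (Some w) -> conn L'.
Proof.
move=> hK sK cL jc; apply: (@conn_hub _ _ (Some w)) => [[x|]].
  by apply: connect_mono sK _; apply: connect_lift.
by apply: connect1; apply: joins_adj cL jc.
Qed.

Lemma attach2 K (L' : seq (edge (option V))) (w1 w2 : V) c1 c2 :
  (forall x, connect (adjL K) x w1 || connect (adjL K) x w2) -> {subset map lft K <= L'} ->
  c1 \in L' -> joins c1 None (Some w1) -> c2 \in L' -> joins c2 None (Some w2) -> conn L'.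
Proof.
move=> hK sK c1L j1 c2L j2; apply: (@conn_hub _ _ None) => [[x|]]; last by rewrite connect0.
have a1 : connect (adjL L') (Some w1) None.
  by apply: connect1; rewrite adjL_sym; apply: joins_adj c1L j1.
have a2 : connect (adjL L') (Some w2) None.
  by apply: connect1; rewrite adjL_sym; apply: joins_adj c2L j2.
case/orP: (hK x) => h.
  by apply: connect_trans a1; apply: connect_mono sK _; apply: connect_lift.
by apply: connect_trans a2; apply: connect_mono sK _; apply: connect_lift.
Qed.

Lemma all_lift K : all isdiff K -> all isdiff (map lft K).
Proof. by rewrite all_map. Qed.

Lemma all_rem (T : eqType) (P : pred T) a (s : seq T) : all P s -> all P (rem a s).
Proof. by move=> h; apply/allP => x /mem_rem; move/allP: h; apply. Qed.

Lemma core (b0 : edge V) L1 L2 :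
  conn L1 -> conn L2 -> all isdiff L1 ->
  exists (L1' : seq (edge (option V))) (K2 : seq (edge V)), [/\ conn L1', all isdiff L1', conn K2 &
    msub (L1' ++ map lft K2)
      (Edge (Some (e1 b0)) None Diffusive :: Edge (Some (e2 b0)) None Diffusive ::
         rem (lft b0) (map lft (L1 ++ L2)))].
Proof.
move=> c1 c2 d1.
set b1 := Edge (Some (e1 b0)) None Diffusive.
set b2 := Edge (Some (e2 b0)) None Diffusive.
have j1 : joins b1 None (Some (e1 b0)) by apply/orP; right; rewrite /= !eqxx.
have j2 : joins b2 None (Some (e2 b0)) by apply/orP; right; rewrite /= !eqxx.
have db1 : isdiff b1 by [].
have db2 : isdiff b2 by [].
clearbody b1 b2.
case: (boolP (b0 \in L1)) => b0L1.
  exists (b1 :: b2 :: map lft (rem b0 L1)), L2; split => //.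
  - apply: (attach2 (K := rem b0 L1)) (j1) _ j2.
    + by move=> x; apply: cut_lemma.
    + by move=> e he; rewrite !in_cons he !orbT.
    + by rewrite mem_head.
    + by rewrite !in_cons eqxx orbT.
  - by rewrite /= db1 db2 all_lift ?all_rem.
  - move=> e; rewrite map_rem_inj; last exact: (@ledge_inj V).
    have i1 : lft b0 \in map lft L1 by rewrite mem_lift.
    have i2 : lft b0 \in map lft (L1 ++ L2) by rewrite mem_lift mem_cat b0L1.
    have := count_rem_in e i1; have := count_rem_in e i2.
    rewrite /= !map_cat !count_cat /=; genl.
have dl1 : all isdiff (b1 :: map lft L1) by rewrite /= db1 all_lift.
have cl1 : conn (b1 :: map lft L1).
  apply: (attach (K := L1)) j1 => //; last by rewrite mem_head.
  by move=> e he; rewrite in_cons he orbT.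
have nl1 : lft b0 \notin map lft L1 by rewrite mem_lift.
case: (boolP (b0 \in L2)) => b0L2; last first.
  exists (b1 :: map lft L1), L2; split => //.
  move=> e; rewrite rem_id; last by rewrite mem_lift mem_cat negb_or b0L1.
  by rewrite /= !map_cat !count_cat /=; genl.
have H2 := fun x => cut_lemma b0L2 (c2 x (e1 b0)).
have i2 : lft b0 \in map lft L2 by rewrite mem_lift.
have i12 : lft b0 \in map lft (L1 ++ L2) by rewrite mem_lift mem_cat b0L2 orbT.
set Cp := fun x => connect (adjL (rem b0 L2)) (e1 b0) x.
case: (boolP (Cp (e2 b0))) => CM2.
  exists (b1 :: map lft L1), (rem b0 L2); split => //.
    apply: (@conn_hub _ _ (e1 b0)) => x; case/orP: (H2 x) => // h.
    by apply: connect_trans h _; rewrite csym.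
  move=> e; rewrite map_rem_inj; last exact: (@ledge_inj V).
  have := count_rem_in e i2; have := count_rem_in e i12.
  by rewrite /= !map_cat !count_cat /=; genl.
have [f [fL cf hf]] := exchange c1 (connect0 _ (e1 b0) : Cp (e1 b0)) CM2.
exists (b1 :: b2 :: map lft (rem f L1)), (f :: rem b0 L2); split => //.
- apply: (attach2 (K := rem f L1)) (j1) _ j2 => //.
  + by move=> e he; rewrite !in_cons he !orbT.
  + by rewrite mem_head.
  + by rewrite !in_cons eqxx orbT.
- by rewrite /= db1 db2 all_lift ?all_rem.
- have sK : {subset rem b0 L2 <= f :: rem b0 L2} by move=> e he; rewrite in_cons he orbT.
  have fa : adjL (f :: rem b0 L2) (e1 f) (e2 f) by apply: edge_adj; rewrite mem_head.
  have key : forall u v, Cp u -> ~~ Cp v -> adjL (f :: rem b0 L2) u v ->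
      connect (adjL (f :: rem b0 L2)) (e2 b0) (e1 b0).
    move=> u v Cu Cv auv.
    have hv : connect (adjL (rem b0 L2)) v (e2 b0).
      case/orP: (H2 v) => // h; case/negP: Cv; by rewrite /Cp csym.
    rewrite csym; apply: connect_trans (connect_mono sK Cu) _.
    apply: connect_trans (connect1 auv) _; exact: connect_mono sK hv.
  have M21 : connect (adjL (f :: rem b0 L2)) (e2 b0) (e1 b0).
    move: cf; case: (boolP (Cp (e1 f))) => C1; case: (boolP (Cp (e2 f))) => C2 //= _.
      exact: (key _ _ C1 C2 fa).
    by apply: (key _ _ C2 C1); rewrite adjL_sym.
  apply: (@conn_hub _ _ (e1 b0)) => x; case/orP: (H2 x) => h.
    exact: connect_mono sK h.
  exact: connect_trans (connect_mono sK h) M21.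
- move=> e; rewrite map_rem_inj; last exact: (@ledge_inj V).
  have iF : lft f \in map lft L1 by rewrite mem_lift.
  have := count_rem_in e i2; have := count_rem_in e i12; have := count_rem_in e iF.
  rewrite /= !map_cat !count_cat /= map_rem_inj; last exact: (@ledge_inj V).
  genl.
Qed.
End Core.


Definition W (V : finType) (G : mgraph V) := exists L1 L2 : seq (edge V),
  [/\ msub (L1 ++ L2) G, all isdiff L1, conn L1 & conn L2].

Section Conv.
Variable V : finType.

Lemma count_sub_uniq (T : eqType) (p : pred T) (s t : seq T) :
  uniq s -> {subset s <= t} -> count p s <= count p t.
Proof.
move=> us st; rewrite -!size_filter; apply: uniq_leq_size; first exact: filter_uniq.
by move=> x; rewrite !mem_filter => /andP [-> /st].
Qed.

Lemma countG (G : mgraph V) e : count_mem e G = count (fun i => eat i == e) (enum 'I_(size G)).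
Proof.
have GE : G = map (@eat V G) (enum 'I_(size G)) by symmetry; exact: (map_tnth_enum (in_tuple G)).
by rewrite {1}GE count_map.
Qed.

Lemma dc_W (G : mgraph V) : doubly_connected G -> W G.
Proof.
case=> [Bb [Bu [dis [hd [[T1 [s1 [c1 _]]] [T2 [s2 [c2 _]]]]]]]].
exists (map (@eat V G) (enum T1)), (map (@eat V G) (enum T2)); split.
- move=> e; rewrite -map_cat count_map countG; apply: count_sub_uniq; last by move=> i; rewrite mem_enum.
  rewrite cat_uniq !enum_uniq andbT /=; apply/hasPn => i; rewrite !mem_enum => iT2.
  apply/negP => iT1; have := disjointFr dis (subsetP s1 _ iT1).
  by rewrite (subsetP s2 _ iT2).
- apply/allP => e /mapP [i]; rewrite mem_enum => iT1 ->.
  by rewrite /isdiff hd // (subsetP s1 _ iT1).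
- move=> x y; apply: connect_sub (c1 x y) => a b /existsP [i /andP [iT j]].
  by apply: connect1; apply/hasP; exists (eat i); rewrite ?map_f ?mem_enum.
- move=> x y; apply: connect_sub (c2 x y) => a b /existsP [i /andP [iT j]].
  by apply: connect1; apply/hasP; exists (eat i); rewrite ?map_f ?mem_enum.
Qed.

Lemma idx_exists (G : mgraph V) (L : seq (edge V)) :
  msub L G -> exists s : seq 'I_(size G), uniq s /\ map (@eat V G) s = L.
Proof.
elim: L => [|e L IH] hs; first by exists [::].
have [|s [us sE]] := IH.
  by move=> x; apply: leq_trans (hs x); rewrite /= leq_addl.
case: (pickP (fun i => (eat i == e) && (i \notin s))) => [i /andP [/eqP ie ins]|none].
  by exists (i :: s); rewrite /= ins us ie sE.
have h1 := hs e; rewrite /= eqxx (countG G e) in h1.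
have h2 : count_mem e L = count (fun i => eat i == e) s by rewrite -sE count_map.
move: h1; rewrite h2.
have : count (fun i => eat i == e) (enum 'I_(size G)) <= count (fun i => eat i == e) s.
  rewrite -!size_filter; apply: uniq_leq_size; first by apply: filter_uniq; apply: enum_uniq.
  move=> i; rewrite !mem_filter => /andP [ie _]; rewrite ie /=.
  by have := none i; rewrite ie /= => /negbFE.
move: (count _ _) (count _ _) => a b; lia.
Qed.

Lemma span_exists (G : mgraph V) (S : {set 'I_(size G)}) :
  connects S -> exists T : {set 'I_(size G)}, T \subset S /\ spanning_tree T.
Proof.
have main : forall n (S : {set 'I_(size G)}), #|S| < n -> connects S ->
    exists T : {set 'I_(size G)}, T \subset S /\ spanning_tree T.
  elim=> [|n IH] {}S //= hS cS.
  case: (classic (exists i, i \in S /\ connects (S :\ i))) => [[i [iS ci]]|no].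
    have [|T [sT spT]] := IH (S :\ i) _ ci.
      by apply: (leq_trans (proper_card (properD1 iS))); rewrite -ltnS.
    by exists T; split => //; apply: subset_trans sT (subD1set _ _).
  exists S; split => //; split => // i iS ci; apply: no; by exists i.
exact: (main #|S|.+1).
Qed.

Lemma W_dc (G : mgraph V) : W G -> doubly_connected G.
Proof.
case=> L1 [L2 [hs d1 c1 c2]].
have [s [us sE]] := idx_exists hs.
set k := size L1.
have tE : map (@eat V G) (take k s) = L1 by rewrite map_take sE take_size_cat.
have dE : map (@eat V G) (drop k s) = L2 by rewrite map_drop sE drop_size_cat.
exists [set i in take k s], [set i in drop k s]; split; last split; last split.
- rewrite disjoint_subset; apply/subsetP => i; rewrite !inE => it.
  move: us; rewrite -{1}(cat_take_drop k s) cat_uniq => /and3P [_ hh _].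
  by apply/negP => id; case/negP: hh; apply/hasP; exists i.
- move=> i; rewrite inE => it; move/allP: d1 => /(_ (eat i)).
  by rewrite -tE map_f // => /(_ isT) /eqP.
- have [T [sT spT]] : exists T : {set 'I_(size G)}, T \subset [set i in take k s] /\ spanning_tree T.
    apply: span_exists => x y; apply: connect_sub (c1 x y) => a b /hasP [e eL j].
    move: eL; rewrite -tE => /mapP [i it eE]; subst e.
    by apply: connect1; apply/existsP; exists i; rewrite inE it.
  by exists T.
- have [T [sT spT]] : exists T : {set 'I_(size G)}, T \subset [set i in drop k s] /\ spanning_tree T.
    apply: span_exists => x y; apply: connect_sub (c2 x y) => a b /hasP [e eL j].
    move: eL; rewrite -dE => /mapP [i it eE]; subst e.
    by apply: connect1; apply/existsP; exists i; rewrite inE it.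
  by exists T.
Qed.
End Conv.


Section Graph.
Variable V : eqType.
Implicit Types s : seq (edge V).

Lemma count_set_nth (x0 : edge V) s k y e : k < size s ->
  count_mem e (set_nth x0 s k y) + (nth x0 s k == e) = count_mem e s + (y == e).
Proof.
move=> ks; have sE : s = take k s ++ nth x0 s k :: drop k.+1 s by rewrite -(drop_nth x0 ks) cat_take_drop.
have cs : count_mem e s = count_mem e (take k s) + ((nth x0 s k == e) + count_mem e (drop k.+1 s)).
  by rewrite {1}sE count_cat.
rewrite set_nthE ks cs !count_cat /=; genl.
Qed.

Lemma count_delete (x0 : edge V) s k e : k < size s ->
  count_mem e (delete_edge s k) + (nth x0 s k == e) = count_mem e s.
Proof.
move=> ks; have sE : s = take k s ++ nth x0 s k :: drop k.+1 s by rewrite -(drop_nth x0 ks) cat_take_drop.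
have cs : count_mem e s = count_mem e (take k s) + ((nth x0 s k == e) + count_mem e (drop k.+1 s)).
  by rewrite {1}sE count_cat.
rewrite /delete_edge cs !count_cat /=; genl.
Qed.

Lemma to_diffE (x0 : edge V) s k : k < size s ->
  to_diffusive s k = set_nth x0 s k (Edge (e1 (nth x0 s k)) (e2 (nth x0 s k)) Diffusive).
Proof. by move=> ks; rewrite /to_diffusive set_nthE ks (drop_nth x0 ks) /= take0. Qed.

Lemma map_delete (W : Type) (f : edge V -> edge W) s k :
  map f (delete_edge s k) = delete_edge (map f s) k.
Proof. by rewrite /delete_edge map_cat map_take map_drop. Qed.

Lemma mem_delete (x0 : edge V) s k i : i < size s -> k < size s -> i != k ->
  nth x0 s i \in delete_edge s k.
Proof.
move=> hi ks ik; rewrite /delete_edge.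
case: (ltnP i k) => h.
  have -> : nth x0 s i = nth x0 (take k s ++ drop k.+1 s) i.
    by rewrite nth_cat size_takel ?h ?(ltnW ks) // nth_take.
  apply: mem_nth; rewrite size_cat size_takel ?(ltnW ks) // size_drop.
  set m := size s; have A : i < m := hi; have B : k < m := ks; lia.
have h' : k < i by rewrite ltn_neqAle eq_sym ik h.
have -> : nth x0 s i = nth x0 (take k s ++ drop k.+1 s) i.-1.
  rewrite nth_cat size_takel ?(ltnW ks) // nth_drop.
  have -> : (i.-1 < k) = false by lia.
  by congr nth; lia.
apply: mem_nth; rewrite size_cat size_takel ?(ltnW ks) // size_drop.
set m := size s; have A : i < m := hi; have B : k < m := ks; lia.
Qed.

Lemma blue_at (x0 : edge V) s k : k < size s -> ek (nth x0 s k) = BlueSolid -> is_blue_at s k.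
Proof. by move=> ks h; rewrite /is_blue_at (nth_map x0) . Qed.
End Graph.


Lemma gnewE (V : Type) (g : mgraph V) i0 ib (d : edge V) : i0 < size g -> ib < size g -> i0 != ib ->
  gnew g i0 ib =
  set_nth (Edge None None Diffusive)
    (set_nth (Edge None None Diffusive) (map (@lift_edge V) g) i0
       (Edge (Some (e1 (nth d g i0))) None Diffusive))
    ib (Edge (Some (e1 (nth d g ib))) None BlueSolid)
  ++ [:: Edge (Some (e2 (nth d g i0))) None Diffusive; Edge (Some (e2 (nth d g ib))) None BlueSolid].
Proof.
move=> h0 hb ne; rewrite /gnew (drop_nth d h0) (drop_nth d hb) /= !take0 /=.
congr (_ ++ _); apply: (@eq_from_nth _ (Edge None None Diffusive)).
  rewrite size_map size_zip size_iota minnn !size_set_nth size_map.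
  set m := size g; have A : i0 < m := h0; have B : ib < m := hb; lia.
move=> k; rewrite size_map size_zip size_iota minnn => kn.
rewrite (nth_map (0, d)) ?size_zip ?size_iota ?minnn // nth_zip ?size_iota //.
rewrite nth_iota // add0n nth_set_nth /=.
case: (eqVneq k ib) => [->|nkb]; first by rewrite eq_sym (negbTE ne).
rewrite nth_set_nth /=.
case: (eqVneq k i0) => [->|nk0] //.
by rewrite (nth_map d).
Qed.

Section Main.
Variable V : finType.

Lemma prep (H : mgraph V) (b0 : edge V) : doubly_connected H ->
  exists (L1' : seq (edge (option V))) (K2 : seq (edge V)),
    [/\ conn L1', all isdiff L1', conn K2 &
    msub (L1' ++ map lft K2)
      (Edge (Some (e1 b0)) None Diffusive :: Edge (Some (e2 b0)) None Diffusive ::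
         rem (lft b0) (map lft H))].
Proof.
move/dc_W => [L1 [L2 [hs d1 c1 c2]]].
have [L1' [K2 [a b c A]]] := core b0 c1 c2 d1.
exists L1', K2; split => //; apply: ms_trans A _ => e /=.
have := ms_rem (lft b0) (ms_map (@ledge_inj V) hs) e; genl.
Qed.

Lemma finish (FG : mgraph (option V)) (L1' : seq (edge (option V))) (K2 : seq (edge V))
  (c : edge (option V)) (w : V) (X : seq (edge (option V))) :
  conn L1' -> all isdiff L1' -> conn K2 -> joins c None (Some w) ->
  msub (L1' ++ map lft K2) X -> (forall e, count_mem e X + (c == e) <= count_mem e FG) ->
  doubly_connected FG.
Proof.
move=> c1 d1 cK jc A B; apply: W_dc; exists L1', (c :: map lft K2); split => //.
- move=> e; have := A e; have := B e; rewrite !count_cat /=; genl.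
- apply: (attach (K := K2)) jc => //; last by rewrite mem_head.
  by move=> x xK; rewrite in_cons xK orbT.
Qed.
End Main.


Theorem claimA4 (V : finType) (g : mgraph V) (i0 ib : nat) :
  molecular g ->
  doubly_connected g ->
  i0 < size g -> is_diff_at g i0 ->
  ib < size g -> is_blue_at g ib ->
  (* (i) *)
  (forall j : nat, j != ib -> redundant g j -> redundant (gnew g i0 ib) j) /\
  (* (ii) b3 is at position ib, b4 at position (size g).+1 *)
  (redundant g ib ->
     (redundant (gnew g i0 ib) ib \/ redundant (gnew g i0 ib) (size g).+1) /\
     (redundant (gnew g i0 ib) ib ->
        redundant (to_diffusive (gnew g i0 ib) ib) (size g).+1) /\
     (redundant (gnew g i0 ib) (size g).+1 ->
        redundant (to_diffusive (gnew g i0 ib) (size g).+1) ib)).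
Proof.
move=> _ _ Hi0 Hd0 Hib Hbb.
have [d _] : exists d : edge V, True by case E: g Hib => [|x s] //= _; exists x.
set n := size g.
set b0 := nth d g i0.
set b := nth d g ib.
have ekb0 : ek b0 = Diffusive by move: Hd0; rewrite /is_diff_at (nth_map d).
have ekb : ek b = BlueSolid by move: Hbb; rewrite /is_blue_at (nth_map d).
have i0ib : i0 != ib by apply/eqP => E; move: ekb; rewrite /b -E -/b0 ekb0.
set dO := Edge (@None V) None Diffusive.
set B1 := Edge (Some (e1 b0)) None Diffusive.
set B2 := Edge (Some (e2 b0)) None Diffusive.
set B3 := Edge (Some (e1 b)) None BlueSolid.
set B4 := Edge (Some (e2 b)) None BlueSolid.
set S1 := set_nth dO (set_nth dO (map lft g) i0 B1) ib B3.
have GE : gnew g i0 ib = S1 ++ [:: B2; B4] by rewrite (gnewE d).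
set G := gnew g i0 ib.
have sS1 : size S1 = n.
  rewrite !size_set_nth size_map; have A : i0 < n := Hi0; have B : ib < n := Hib; lia.
have sG : size G = n.+2 by rewrite /G GE size_cat sS1 addn2.
have nthG : forall k, k < n -> k != i0 -> k != ib -> nth dO G k = lft (nth d g k).
  move=> k kn k0 kb; rewrite /G GE nth_cat sS1 kn nth_set_nth /= (negbTE kb) nth_set_nth /= (negbTE k0).
  by rewrite (nth_map d).
have nGib : nth dO G ib = B3 by rewrite /G GE nth_cat sS1 Hib nth_set_nth /= eqxx.
have nGn1 : nth dO G n.+1 = B4 by rewrite /G GE nth_cat sS1 ltnNge leqnSn /= subSnn.
have cG : forall e, count_mem e G + (lft b0 == e) + (lft b == e) =
    count_mem e (map lft g) + (B1 == e) + (B2 == e) + (B3 == e) + (B4 == e).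
  move=> e; rewrite /G GE count_cat /=.
  have sm : size (set_nth dO (map lft g) i0 B1) = n.
    rewrite size_set_nth size_map; have A : i0 < n := Hi0; lia.
  have h1 := @count_set_nth _ dO (set_nth dO (map lft g) i0 B1) ib B3 e ltac:(by rewrite sm).
  have h2 := @count_set_nth _ dO (map lft g) i0 B1 e ltac:(by rewrite size_map).
  have ibi0 : ib != i0 by rewrite eq_sym.
  rewrite nth_set_nth /= (negbTE ibi0) (nth_map d) // -/b in h1.
  rewrite (nth_map d) // -/b0 in h2.
  move: h1 h2; rewrite -/S1; genl.
have lt2 : forall k, k < n -> k < n.+2 by move=> k h; apply: (leq_trans h); apply: leqW.
have ibn2 : ib < n.+2 by apply: lt2.
have jB3 : joins B3 None (Some (e1 b)) by apply/orP; right; rewrite /= !eqxx.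
have jB4 : joins B4 None (Some (e2 b)) by apply/orP; right; rewrite /= !eqxx.
split.
  move=> j njb [Hbj Hdj].
  have jn : j < n.
    by move: Hbj; rewrite /is_blue_at; case: (ltnP j n) => // h; rewrite nth_default // size_map.
  have ekj : ek (nth d g j) = BlueSolid by move: Hbj; rewrite /is_blue_at (nth_map d).
  have nj0 : j != i0 by apply/eqP => E; move: ekj; rewrite E -/b0 ekb0.
  split; first by apply: (@blue_at _ dO G j); [rewrite sG; apply: lt2 | rewrite nthG].
  set H := delete_edge g j.
  have b0H : b0 \in H by apply: (@mem_delete _ d g j i0 Hi0 jn); rewrite eq_sym.
  have [L1' [K2 [c1 d1 cK A]]] := prep b0 Hdj.
  have lb0H : lft b0 \in map lft H by rewrite mem_lift.
  have cH : forall e, count_mem e (map lft H) = (lft b0 == e) + count_mem e (rem (lft b0) (map lft H)).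
    by move=> e; apply: count_rem_in.
  have cD : forall e, count_mem e (map lft H) + (lft (nth d g j) == e) = count_mem e (map lft g).
    by move=> e; rewrite /H map_delete -(nth_map d dO) //; apply: count_delete; rewrite size_map.
  have cE : forall e, count_mem e (delete_edge G j) + (lft (nth d g j) == e) = count_mem e G.
    by move=> e; rewrite -nthG //; apply: count_delete; rewrite sG; apply: lt2.
  case: (boolP (b \in K2)) => bK.
    apply: W_dc; exists L1', (B3 :: B4 :: map lft (rem b K2)); split => //.
      move=> e; have := A e; have := cH e; have := cD e; have := cE e; have := cG e.
      have lbK : lft b \in map lft K2 by rewrite mem_lift.
      have := count_rem_in e lbK.
      rewrite map_rem_inj; last exact: ledge_inj.
      rewrite /= !count_cat /=; genl.
    apply: (attach2 (K := rem b K2) (w1 := e1 b) (w2 := e2 b) (c1 := B3) (c2 := B4)) => //.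
    - by move=> x; apply: cut_lemma.
    - by move=> x xK; rewrite !in_cons xK !orbT.
    - by rewrite mem_head.
    - by rewrite !in_cons eqxx orbT.
  apply: W_dc; exists L1', (B3 :: map lft K2); split => //.
    move=> e; case: (eqVneq (lft b) e) => [<-|ne].
      rewrite (count_memPn _) //; rewrite mem_cat in_cons mem_lift (negbTE bK) orbF negb_or.
      apply/andP; split.
        by apply/negP => h; move/allP: d1 => /(_ _ h); rewrite /isdiff /= ekb.
      by apply/eqP; case.
    have := A e; have := cH e; have := cD e; have := cE e; have := cG e.
    rewrite (negbTE ne) /= !count_cat /=; genl.
  apply: (attach (K := K2) (w := e1 b) (c := B3)) => //.
  - by move=> x xK; rewrite !in_cons xK !orbT.
  - by rewrite mem_head.
move=> [_ Hdb].
set H := delete_edge g ib.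
have b0H : b0 \in H by apply: (@mem_delete _ d g ib i0 Hi0 Hib).
have [L1' [K2 [c1 d1 cK A]]] := prep b0 Hdb.
have lb0H : lft b0 \in map lft H by rewrite mem_lift.
have cH : forall e, count_mem e (map lft H) = (lft b0 == e) + count_mem e (rem (lft b0) (map lft H)).
  by move=> e; apply: count_rem_in.
have cD : forall e, count_mem e (map lft H) + (lft b == e) = count_mem e (map lft g).
  by move=> e; rewrite /H map_delete /b -(nth_map d dO) //; apply: count_delete; rewrite size_map.
split.
  left; split; first by apply: (@blue_at _ dO G ib); rewrite ?sG ?nGib.
  apply: (finish (c := B4) (w := e2 b) c1 d1 cK jB4 A) => e.
  have := cH e; have := cD e; have := cG e.
  have := @count_delete _ dO G ib e ltac:(by rewrite sG); rewrite nGib.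
  rewrite /=; genl.
split.
  move=> _; set TD := to_diffusive G ib.
  set B3d := Edge (Some (e1 b)) None Diffusive.
  have TDE : TD = set_nth dO G ib B3d.
    by rewrite /TD (to_diffE dO) ?sG // nGib.
  have sTD : size TD = n.+2 by rewrite TDE size_set_nth sG; apply/maxn_idPr.
  have nTD : nth dO TD n.+1 = B4.
    rewrite TDE nth_set_nth /= nGn1; case: eqVneq => // E.
    have Aib : ib < n := Hib; lia.
  split; first by apply: (@blue_at _ dO TD n.+1); rewrite ?sTD ?nTD.
  apply: (finish (c := B3d) (w := e1 b) c1 d1 cK _ A) => [|e].
    by apply/orP; right; rewrite /= !eqxx.
  have := cH e; have := cD e; have := cG e.
  have := @count_delete _ dO TD n.+1 e ltac:(by rewrite sTD); rewrite nTD.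
  have := @count_set_nth _ dO G ib B3d e ltac:(by rewrite sG); rewrite nGib -TDE.
  rewrite /=; genl.
move=> _; set TD := to_diffusive G n.+1.
set B4d := Edge (Some (e2 b)) None Diffusive.
have TDE : TD = set_nth dO G n.+1 B4d.
  by rewrite /TD (to_diffE dO) ?sG // nGn1.
have sTD : size TD = n.+2 by rewrite TDE size_set_nth sG; apply/maxn_idPr.
have nTD : nth dO TD ib = B3.
  rewrite TDE nth_set_nth /= nGib; case: eqVneq => // E.
  have Aib : ib < n := Hib; lia.
split; first by apply: (@blue_at _ dO TD ib); rewrite ?sTD ?nTD.
apply: (finish (c := B4d) (w := e2 b) c1 d1 cK _ A) => [|e].
  by apply/orP; right; rewrite /= !eqxx.
have := cH e; have := cD e; have := cG e.
have := @count_delete _ dO TD ib e ltac:(by rewrite sTD); rewrite nTD.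
have := @count_set_nth _ dO G n.+1 B4d e ltac:(by rewrite sG); rewrite nGn1 -TDE.
rewrite /=; genl.
Qed.
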